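(* Let $G$ be a connected bipartite graph with at least two vertices. A vertex $v\in V(G)$ is an $\mathcal{L}$-branch leaf of some BFS ordering of $G$ if and only if there is a vertex $r\in V(G)\setminus\{v\}$ such that $\mathrm{dist}_G(r,w)=\mathrm{dist}_{G-v}(r,w)$ for all $w\in V(G)\setminus\{v\}$.
   Context: Graphs are finite, simple, undirected; $\mathrm{dist}_H(a,b)$ is the number of edges of a shortest $a$-$b$ path in $H$. A vertex ordering of $G$ is a bijection $\sigma:\{1,\dots,n\}\to V(G)$; $u\prec_\sigma w$ means $u$ comes before $w$. BFS orderings are produced by the label search: initially all labels are $\emptyset$; for $i=1,\dots,n$ choose any unnumbered vertex $x$ such that there is no unnumbered $y$ with $\mathrm{label}(x)\prec\mathrm{label}(y)$, set $\sigma(i)=x$, and add $i$ to the labels of the unnumbered neighbors of $x$, where $A\prec B$ iff ($A=\emptyset$ and $B\neq\emptyset$) or $\min(A)>\min(B)$. The $\mathcal{L}$-tree of $\sigma$ is the spanning tree containing, for each $v\neq\sigma(1)$, the edge from $v$ to its rightmost neighbor $w$ with $w\prec_\sigma v$. A vertex $v\neq\sigma(1)$ that is a leaf of the $\mathcal{L}$-tree is an $\mathcal{L}$-branch leaf of $\sigma$. *)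

(* Defs.v *)
(* A graph is a symmetric irreflexive relation e on a finType T. *)
From mathcomp Require Import all_boot.
Set Implicit Arguments. Unset Strict Implicit. Unset Printing Implicit Defensive.

Section Graph.
Variables (T : finType) (e : rel T).

Definition connected_graph : Prop := forall x y : T, connect e x y.

Definition bipartite : Prop :=
  exists c : T -> bool, forall x y, e x y -> c x != c y.

(* A walk from a of length d ending at b, all of whose vertices satisfy P
   (i.e. a walk in the induced subgraph G[P]). *)
Definition walk_in (P : pred T) (a b : T) (d : nat) : Prop :=
  exists p : seq T, [&& path e a p, last a p == b, all P (a :: p) & size p == d].

(* is_dist P a b d  :<->  dist_{G[P]}(a,b) = d  (a finite value). *)
Definition is_dist (P : pred T) (a b : T) (d : nat) : Prop :=
  walk_in P a b d /\ forall k, walk_in P a b k -> d <= k.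

(* Vertex orderings: sigma(i+1) = nth s i (0-indexed positions). *)
Definition vertex_ordering (s : seq T) : Prop := uniq s /\ forall x, x \in s.

(* label of x just before step i (0-indexed): positions j < i of numbered
   neighbours of x. Positions are 0-indexed (shift by 1 is irrelevant). *)
Definition label (s : seq T) (i : nat) (x : T) : seq nat :=
  [seq j <- iota 0 i | e (nth x s j) x].

Definition seq_min (A : seq nat) : nat := foldr minn (head 0 A) A.

Definition lab_lt (A B : seq nat) : bool :=
  ((A == [::]) && (B != [::])) ||
  [&& A != [::], B != [::] & seq_min B < seq_min A].

Definition is_BFS (s : seq T) : Prop :=
  vertex_ordering s /\
  forall i, i < size s -> forall y, y \notin take i s ->
    ~~ lab_lt (label s i (nth y s i)) (label s i y).

Definition Lparent (s : seq T) (v w : T) : Prop :=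
  [/\ index w s < index v s, e v w &
      forall u, index u s < index v s -> e v u -> index u s <= index w s].

(* v is an L-branch leaf: v <> sigma(1) and v is a leaf of the L-tree,
   i.e. v is the L-parent of no vertex (its only tree edge is to its parent). *)
Definition L_branch_leaf (s : seq T) (v : T) : Prop :=
  index v s != 0 /\ ~ (exists u, Lparent s u v).

End Graph.

(* Main.v *)
Require Import Defs.
From mathcomp Require Import all_boot zify.
From Stdlib Require Import Classical.
Set Implicit Arguments. Unset Strict Implicit. Unset Printing Implicit Defensive.

Lemma foldr_min_le x0 A : foldr minn x0 A <= x0 /\ forall a, a \in A -> foldr minn x0 A <= a.
Proof.
elim: A => [|b A [IH1 IH2]] /=; first by split.
split; first by rewrite geq_min IH1 orbT.
move=> a; rewrite in_cons => /orP [/eqP->|aA]; first by rewrite geq_min leqnn.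
by rewrite geq_min IH2 ?orbT.
Qed.

Lemma foldr_min_in x0 A : foldr minn x0 A \in x0 :: A.
Proof.
elim: A => [|b A IH] /=; first by rewrite mem_seq1.
rewrite /minn; case: ltnP => _; first by rewrite !in_cons eqxx orbT.
move: IH; rewrite !in_cons => /orP [->|->] //; by rewrite !orbT.
Qed.

Lemma seq_min_le A a : a \in A -> seq_min A <= a.
Proof. by move=> aA; rewrite /seq_min; case: (foldr_min_le (head 0 A) A) => _; apply. Qed.

Lemma seq_min_in A : A != [::] -> seq_min A \in A.
Proof.
case: A => [//|b A] _; rewrite /seq_min /=.
have := foldr_min_in b (b :: A); rewrite /= in_cons => /orP [/eqP ->|//].
by rewrite in_cons eqxx.
Qed.

Lemma mem_label (T : finType) (e : rel T) s i x j :
  (j \in label e s i x) = (j < i) && e (nth x s j) x.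
Proof. by rewrite /label mem_filter mem_iota add0n andbC. Qed.

Section Build.
Variables (T : finType) (e : rel T) (r : T) (P : seq T).

Definition lab (pre : seq T) x := [seq j <- iota 0 (size pre) | e (nth x pre j) x].
Definition keyl m (A : seq nat) := if A is [::] then m else seq_min A.
Definition key pre x := keyl (size pre) (lab pre x).
Definition cost pre x := (key pre x).*2 + (x \notin P).
Definition pickv pre :=
  if [pick x | x \notin pre] is Some x0 then [arg min_(x < x0 | x \notin pre) cost pre x] else r.
Fixpoint build k := if k is k'.+1 then rcons (build k') (pickv (build k')) else [:: r].

Lemma pick_spec pre y : y \notin pre ->
  pickv pre \notin pre /\ forall z, z \notin pre -> cost pre (pickv pre) <= cost pre z.
Proof.
move=> yn; rewrite /pickv; case: pickP => [x0 xn|/(_ y)]; last by rewrite yn.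
by case: (@arg_minnP _ x0 (fun x => x \notin pre) (cost pre) xn) => z zn zmin; split.
Qed.

Lemma size_build k : size (build k) = k.+1.
Proof. by elim: k => //= k IH; rewrite size_rcons IH. Qed.

Lemma take_build k m : k <= m -> take k.+1 (build m) = build k.
Proof.
elim: m k => [|m IH] k; first by rewrite leqn0 => /eqP ->.
rewrite leq_eqVlt => /orP [/eqP -> | lt]; first by rewrite take_oversize // size_build.
by rewrite /= -cats1 takel_cat ?size_build // IH.
Qed.

Lemma nth_build k : nth r (build k.+1) k.+1 = pickv (build k).
Proof. by rewrite /= nth_rcons size_build ltnn eqxx. Qed.

Lemma uniq_small (u : seq T) : uniq u -> size u <= #|T|.
Proof. by move=> uu; rewrite cardT; apply: uniq_leq_size => // x _; rewrite mem_enum. Qed.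

Lemma build_uniq k : k < #|T| -> uniq (build k).
Proof.
elim: k => [|k IH] lt //=; rewrite rcons_uniq (IH (ltnW lt)) andbT.
case: (pickP (fun y => y \notin build k)) => [y yn|no]; first by case: (pick_spec yn).
have : #|T| <= size (build k).
  by rewrite cardT; apply: uniq_leq_size; [exact: enum_uniq | move=> x _; move: (no x) => /negbFE].
by rewrite size_build leqNgt lt.
Qed.

Definition sB := build #|T|.-1.

Lemma N_pos : 0 < #|T|. Proof. by apply/card_gt0P; exists r. Qed.

Lemma size_sB : size sB = #|T|.
Proof. by rewrite size_build prednK // N_pos. Qed.

Lemma sB_uniq : uniq sB.
Proof. by apply: build_uniq; rewrite prednK ?N_pos. Qed.

Lemma sB_all x : x \in sB.
Proof.
apply/negPn/negP => xn.
have : uniq (x :: sB) by rewrite /= xn sB_uniq.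
by move/uniq_small; rewrite /= size_sB ltnn.
Qed.

Lemma sB_take i : 0 < i <= #|T| -> take i sB = build i.-1.
Proof. by case: i => // i /= h; rewrite take_build // -ltnS prednK ?N_pos. Qed.

Lemma sB_nth i : 0 < i < #|T| -> nth r sB i = pickv (build i.-1).
Proof.
case: i => // i /= h.
rewrite -(nth_take r (ltnSn i.+1)) sB_take /=; first exact: nth_build. exact: h.
Qed.

Lemma sB0 : nth r sB 0 = r.
Proof. by rewrite -(nth_take r (ltnSn 0)) sB_take ?N_pos. Qed.

Lemma label_lab i x : i <= #|T| -> label e sB i x = lab (take i sB) x.
Proof.
move=> le; rewrite /label /lab size_takel ?size_sB //.
apply: eq_in_filter => j; rewrite mem_iota add0n /= => ji.
by rewrite nth_take.
Qed.

Lemma lab_lt_key m A B : all (fun j => j < m) A -> all (fun j => j < m) B ->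
  lab_lt A B = (keyl m B < keyl m A).
Proof.
case: A => [|a A]; case: B => [|b B] hA hB.
- by rewrite /= ltnn.
- by have := seq_min_in (A := b :: B) isT => /(allP hB) /= ->.
- have := seq_min_in (A := a :: A) isT => /(allP hA) /= h; rewrite ltnNge ltnW // andbF.
- by rewrite /lab_lt /keyl; case: (seq_min _ < _).
Qed.

Lemma lab_small pre x : all (fun j => j < size pre) (lab pre x).
Proof. by apply/allP => j; rewrite mem_filter mem_iota add0n => /andP []. Qed.

Lemma cost_key pre x y : cost pre x <= cost pre y -> key pre x <= key pre y.
Proof. rewrite /cost -!addnn; case: (x \notin P); case: (y \notin P) => /=; lia. Qed.

Lemma sB_BFS : is_BFS e sB.
Proof.
split; first by split; [exact: sB_uniq | exact: sB_all].
move=> i; rewrite size_sB => iN y yn.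
case: (posnP i) => [-> | i0]; first by rewrite /label /= /lab_lt /=.
rewrite (@set_nth_default _ sB r y i); last by rewrite size_sB.
rewrite !label_lab; try exact: ltnW.
have hi : 0 < i <= #|T| by rewrite i0 ltnW.
rewrite (lab_lt_key (m := size (take i sB))) ?lab_small // -/(key _ _) -/(key _ _).
rewrite sB_nth ?i0 // sB_take // -leqNgt.
rewrite sB_take // in yn.
by case: (pick_spec yn) => _ /(_ y yn) /cost_key.
Qed.

End Build.

Lemma sB_greedy (T : finType) (e : rel T) (r : T) (P : seq T) j y : 0 < j < #|T| -> y \notin take j (sB e r P) ->
  (keyl j (label e (sB e r P) j (nth r (sB e r P) j))).*2 + (nth r (sB e r P) j \notin P) <=
  (keyl j (label e (sB e r P) j y)).*2 + (y \notin P).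
Proof.
move=> /andP [j0 jN] yn.
have hj : 0 < j <= #|T| by rewrite j0 ltnW.
have := yn; rewrite sB_take // => yn'.
have [_ /(_ y yn') h] := pick_spec e r P yn'.
rewrite !label_lab; try exact: ltnW.
have hj' : 0 < j < #|T| by rewrite j0 jN.
rewrite -(sB_nth e r P hj') -(sB_take e r P hj) in h.
have sz : size (take j (sB e r P)) = j by rewrite size_takel // size_sB ltnW.
by move: h; rewrite /cost /key sz.
Qed.

Lemma cross_edge (T : finType) (e : rel T) (A : pred T) x y :
  connect e x y -> A x -> ~~ A y -> exists a b, [/\ A a, ~~ A b & e a b].
Proof.
move=> /connectP [p]; elim: p x => [|z p IH] x /=; first by move=> _ -> ->.
move=> /andP [exz pz] yl Ax nAy.
case Az: (A z); first exact: (IH z pz yl Az nAy).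
by exists x, z; rewrite Az.
Qed.

Section BFS.
Variables (T : finType) (e : rel T).
Hypotheses (e_sym : symmetric e) (e_irr : irreflexive e) (e_conn : connected_graph e).
Variables (s : seq T) (d0 : T).
Hypothesis sB : is_BFS e s.

Let n := size s.
Local Notation s_ := (nth d0 s).

Lemma s_uniq : uniq s. Proof. by case: sB => [[]]. Qed.
Lemma s_all x : x \in s. Proof. by case: sB => [[_]]. Qed.

Lemma size_s : size s = #|T|.
Proof.
move/card_uniqP: s_uniq => <-; apply: eq_card => x; by rewrite s_all.
Qed.

Lemma idx_lt x : index x s < n. Proof. by rewrite index_mem s_all. Qed.
Lemma nth_idx x : s_ (index x s) = x. Proof. by rewrite nth_index ?s_all. Qed.
Lemma idx_nth i : i < n -> index (s_ i) s = i.
Proof. by move=> lt; rewrite index_uniq ?s_uniq. Qed.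

Lemma nthD x k : k < n -> nth x s k = s_ k.
Proof. exact: set_nth_default. Qed.

Definition par i := seq_min (label e s i (s_ i)).

Lemma lab_ne i : 0 < i < n -> label e s i (s_ i) != [::].
Proof.
move=> /andP [i0 iN].
have [a [b [Aa nAb eab]]] := cross_edge (A := mem (take i s)) (e_conn (s_ 0) (s_ i))
   ltac:(by rewrite /= in_take ?s_all // idx_nth // (ltn_trans i0 iN))
   ltac:(by rewrite /= in_take ?s_all // idx_nth // ltnn).
have hb : label e s i b != [::].
  apply/eqP => h; have : index a s \in label e s i b.
    by rewrite mem_label (nth_index _ (s_all a)) eab andbT -in_take ?s_all.
  by rewrite h.
case: sB => _ /(_ i iN b nAb); rewrite (set_nth_default d0) //; apply: contra => /eqP ->.
by rewrite /lab_lt hb.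
Qed.

Lemma par_lab i : 0 < i < n -> par i < i /\ e (s_ (par i)) (s_ i).
Proof.
move=> h; have := seq_min_in (lab_ne h); rewrite -/(par i) mem_label => /andP [a b].
case/andP: h => _ h; split=> //; move: b; rewrite nthD //; exact: (ltn_trans a h).
Qed.

Lemma par_min i j : i < n -> j < i -> e (s_ j) (s_ i) -> par i <= j.
Proof.
move=> iN ji eji; apply: seq_min_le; rewrite mem_label ji /=.
by rewrite (set_nth_default d0) // (leq_trans ji) // ltnW.
Qed.

Lemma par_mono i j : 0 < i -> i <= j -> j < n -> par i <= par j.
Proof.
move=> i0 ij jN; have iN := leq_ltn_trans ij jN.
have [pi1 pi2] := par_lab (i:=i) ltac:(by rewrite i0 iN).
have [pj1 pj2] := par_lab (i:=j) ltac:(by rewrite (leq_trans i0 ij) jN).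
case: (ltnP (par j) i) => pji; last by apply: leq_trans (ltnW pi1) pji.
have nt : s_ j \notin take i s by rewrite in_take ?s_all // idx_nth // -leqNgt.
case: sB => _ /(_ i iN (s_ j) nt); rewrite (set_nth_default d0 (s_ j)) //.
set A := label e s i (s_ i); set B := label e s i (s_ j).
have pB : par j \in B by rewrite mem_label pji (set_nth_default d0) // (leq_trans pji) // ltnW.
have Bne : B != [::] by apply/eqP => h; rewrite h in pB.
have Ane : A != [::] by apply: lab_ne; rewrite i0 iN.
rewrite /lab_lt (negbTE Ane) Bne /= -leqNgt => h.
exact: (leq_trans h (seq_min_le pB)).
Qed.

Fixpoint Lf (f i : nat) : nat :=
  if f is f'.+1 then (if i == 0 then 0 else (Lf f' (par i)).+1) else 0.

Lemma Lf_stable f g i : i < n -> i <= f -> i <= g -> Lf f i = Lf g i.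
Proof.
elim: f g i => [|f IH] g i iN.
  by rewrite leqn0 => /eqP -> _; case: g.
case: (posnP i) => [-> | i0] iF; first by case: g.
case: g => [|g] ig; first by rewrite leqn0 in ig; rewrite (eqP ig) in i0.
rewrite /= (negbTE (lt0n_neq0 i0)); congr _.+1.
have [p1 _] := par_lab (i:=i) ltac:(by rewrite i0 iN).
apply: IH.
- exact: ltn_trans p1 iN.
- by rewrite -ltnS (leq_trans p1 iF).
- by rewrite -ltnS (leq_trans p1 ig).
Qed.

Definition Lv i := Lf i i.

Lemma Lv0 : Lv 0 = 0. Proof. by []. Qed.

Lemma Lv_rec i : 0 < i < n -> Lv i = (Lv (par i)).+1.
Proof.
move=> /andP [i0 iN]; rewrite /Lv; case: i i0 iN => [//|i] _ iN /=.
have [p1 _] := par_lab (i:=i.+1) ltac:(by rewrite iN).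
congr _.+1; apply: Lf_stable => //; exact: ltn_trans p1 iN.
Qed.

Lemma Lv_mono i j : j < n -> i <= j -> Lv i <= Lv j.
Proof.
elim/ltn_ind: j i => j IH i jN ij.
case: (posnP i) => [-> //|i0].
have j0 := leq_trans i0 ij.
rewrite (Lv_rec (i:=i)) ?i0 ?(leq_ltn_trans ij jN) // (Lv_rec (i:=j)) ?j0 ?jN // ltnS.
have [p1 _] := par_lab (i:=j) ltac:(by rewrite j0 jN).
apply: IH => //; [exact: ltn_trans jN | exact: par_mono].
Qed.

Lemma Lv_eq0 i : i < n -> Lv i = 0 -> i = 0.
Proof. by case: (posnP i) => // i0 iN; rewrite Lv_rec ?i0. Qed.

Definition lev x := Lv (index x s).

Lemma lev_root : lev (s_ 0) = 0.
Proof.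
rewrite /lev idx_nth //; rewrite /n size_s; apply/card_gt0P; by exists d0.
Qed.

Lemma lev_eq0 x : lev x = 0 -> x = s_ 0.
Proof. by move/(Lv_eq0 (idx_lt x)) => h; rewrite -h nth_idx. Qed.

Lemma lev_mono x y : index x s <= index y s -> lev x <= lev y.
Proof. by move=> h; apply: Lv_mono => //; apply: idx_lt. Qed.

Lemma lev_lt_idx x y : lev x < lev y -> index x s < index y s.
Proof. by rewrite ltnNge => h; rewrite ltnNge; apply: contra h; apply: lev_mono. Qed.

Lemma lev_par x : x != s_ 0 ->
  exists y, [/\ e y x, (lev y).+1 = lev x & index y s < index x s].
Proof.
move=> xr; set i := index x s.
have i0 : 0 < i by rewrite lt0n; apply: contra xr => /eqP h; rewrite -(nth_idx x) -/i h.
have h : 0 < i < n by rewrite i0 idx_lt.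
have [p1 p2] := par_lab h; exists (s_ (par i)).
have ip : index (s_ (par i)) s = par i by apply: idx_nth; exact: ltn_trans p1 (idx_lt x).
rewrite /lev ip -/i (Lv_rec h); split => //; by rewrite /i nth_idx in p2.
Qed.

Lemma lev_edge x y : e x y -> lev x <= (lev y).+1.
Proof.
move=> exy; case: (ltngtP (index x s) (index y s)) => h.
- by apply: leq_trans (leqnSn _); apply: lev_mono; apply: ltnW.
- rewrite /lev Lv_rec; last by rewrite (leq_ltn_trans _ h) ?idx_lt.
  rewrite ltnS; apply: Lv_mono; first exact: idx_lt.
  by apply: par_min; rewrite ?idx_lt // nth_idx nth_idx e_sym.
- by move/(congr1 (nth d0 s)): h; rewrite !nth_idx => h; rewrite h e_irr in exy.
Qed.

Lemma lev_path a p : path e a p -> lev (last a p) <= lev a + size p.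
Proof.
elim: p a => [|b p IH] a /=; first by rewrite addn0.
move=> /andP [eab pp]; apply: leq_trans (IH _ pp) _.
by rewrite addnS -addSn leq_add2r lev_edge // e_sym.
Qed.

Lemma lev_walk P w k : walk_in e P (s_ 0) w k -> lev w <= k.
Proof.
case=> p /and4P [pp /eqP <- _ /eqP <-].
by have := lev_path pp; rewrite lev_root.
Qed.

Lemma walk_lev w : walk_in e predT (s_ 0) w (lev w).
Proof.
suff H : forall k w, lev w = k -> walk_in e predT (s_ 0) w k by exact: H.
clear w; elim=> [|k IH] w hw.
  by exists [::]; rewrite /= (lev_eq0 hw) !eqxx.
have wr : w != s_ 0 by apply/eqP => h; move: hw; rewrite h lev_root.
have [y [eyw hy _]] := lev_par wr.
have [p /and4P [pp /eqP pl _ /eqP ps]] := IH y ltac:(by apply: succn_inj; rewrite hy).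
exists (rcons p w); rewrite rcons_path pp pl eyw last_rcons size_rcons ps eqxx.
apply/and4P; split => //; by apply/allP.
Qed.

Lemma is_dist_lev w : is_dist e predT (s_ 0) w (lev w).
Proof. split; [exact: walk_lev | move=> k; exact: lev_walk]. Qed.

Hypothesis e_bip : bipartite e.

Lemma lev_edge_neq x y : e x y -> lev x != lev y.
Proof.
case: e_bip => c hc.
have col : forall k w, lev w = k -> c w = c (s_ 0) (+) odd k.
  elim=> [|k IH] w hw; first by rewrite (lev_eq0 hw) addbF.
  have wr : w != s_ 0 by apply/eqP => h; move: hw; rewrite h lev_root.
  have [u [euw hu _]] := lev_par wr.
  have := hc _ _ euw; rewrite (IH u); last by apply: succn_inj; rewrite hu.
  by rewrite /=; case: (c w); case: (c (s_ 0)); case: (odd k).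
move=> exy; apply/eqP => h; have := hc _ _ exy.
by rewrite (col _ x erefl) (col _ y erefl) h eqxx.
Qed.


Lemma Lparent_ex x : x != s_ 0 -> exists y, Lparent e s x y /\ (lev y).+1 = lev x.
Proof.
move=> xr; have [y0 [ey0 _ iy0]] := lev_par xr.
pose P := fun u => (index u s < index x s) && e x u.
have Py0 : P y0 by rewrite /P iy0 e_sym.
case: (arg_maxnP (fun u => index u s) Py0) => z /andP [iz ez] zmax.
exists z; split; first by split => // u iu eu; apply: zmax; rewrite /P iu eu.
apply/eqP; rewrite eqn_leq; apply/andP; split.
  by rewrite ltn_neqAle eq_sym lev_edge_neq // lev_mono // ltnW.
by rewrite lev_edge.
Qed.

Lemma forward v : L_branch_leaf e s v ->
  s_ 0 != v /\ forall w, w != v -> is_dist e (predC1 v) (s_ 0) w (lev w).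
Proof.
case=> iv nl.
have rv : s_ 0 != v by apply: contra iv => /eqP <-; rewrite idx_nth // /n size_s; apply/card_gt0P; exists d0.
split => // w wv; split; last by move=> k; apply: lev_walk.
suff H : forall k w, lev w = k -> w != v -> walk_in e (predC1 v) (s_ 0) w k by exact: H.
clear w wv; elim=> [|k IH] w hw wv.
  by exists [::]; rewrite /= (lev_eq0 hw) !eqxx rv.
have wr : w != s_ 0 by apply/eqP => h; move: hw; rewrite h lev_root.
have [z [zp hz]] := Lparent_ex wr.
have zv : z != v by apply/eqP => h; apply: nl; exists w; rewrite -h.
have [p /and4P [pp /eqP pl pa /eqP ps]] := IH z ltac:(by apply: succn_inj; rewrite hz) zv.
case: zp => _ ewz _.
exists (rcons p w); rewrite rcons_path pp pl e_sym ewz last_rcons size_rcons ps eqxx /=.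
by move: pa => /= /andP [-> pa]; rewrite -cats1 all_cat pa /= wv eqxx.
Qed.

Lemma tight a p : path e a p -> lev (last a p) = lev a + size p ->
  forall k, k <= size p -> lev (nth a (a :: p) k) = lev a + k.
Proof.
elim: p a => [|b p IH] a /=.
  by move=> _ _ k; rewrite leqn0 => /eqP ->; rewrite addn0.
move=> /andP [eab pp] ht k kle.
have h1 := lev_path pp.
have h2 : lev b <= (lev a).+1 by apply: lev_edge; rewrite e_sym.
have hb : lev b = (lev a).+1 by lia.
have ht' : lev (last b p) = lev b + size p by lia.
case: k kle => [|k] kle; first by rewrite addn0.
by rewrite /= (@set_nth_default _ (b :: p) b a k) ?ltnS // (IH b pp ht' k kle) hb addSnnS.
Qed.

Section First.
Variable p : seq T.
Let Pv := s_ 0 :: p.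
Hypothesis pp : path e (s_ 0) p.
Hypothesis pt : lev (last (s_ 0) p) = size p.
Hypothesis greedy : forall j y, 0 < j < n -> y \notin take j s ->
  (keyl j (label e s j (s_ j))).*2 + (s_ j \notin Pv) <=
  (keyl j (label e s j y)).*2 + (y \notin Pv).

Lemma levP k : k <= size p -> lev (nth (s_ 0) Pv k) = k.
Proof.
by move=> kp; rewrite /Pv (tight pp) ?lev_root // lev_root.
Qed.

Lemma first_layer k : k <= size p -> forall x, lev x = k ->
  index (nth (s_ 0) Pv k) s <= index x s.
Proof.
elim: k => [|k IH] kp x hx.
  by rewrite /= (lev_eq0 hx).
set Q := nth (s_ 0) Pv k.+1; set R := nth (s_ 0) Pv k.
rewrite leqNgt; apply/negP => ltxQ.
set j := index x s.
have xr : x != s_ 0 by apply/eqP => h; move: hx; rewrite h lev_root.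
have j0 : 0 < j by rewrite lt0n; apply: contra xr => /eqP h; rewrite -(nth_idx x) -/j h.
have jn : 0 < j < n by rewrite j0 idx_lt.
have Qn : Q \notin take j s by rewrite in_take ?s_all // -leqNgt ltnW.
have := greedy jn Qn.
have QP : (Q \notin Pv) = false by rewrite /Q mem_nth.
have lR : lev R = k by rewrite /R levP // ltnW.
have Rj : index R s < j by apply: lev_lt_idx; rewrite lR hx.
have RQ : e R Q by move/pathP: pp => /(_ (s_ 0) k kp).
have RinQ : index R s \in label e s j Q by rewrite mem_label Rj nth_index ?s_all.
have kQ : keyl j (label e s j Q) <= index R s.
  by case: (label e s j Q) RinQ => // a l h; apply: seq_min_le.
have kx : keyl j (label e s j (s_ j)) = par j.
  by rewrite /par; case: (label e s j (s_ j)) (lab_ne jn).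
have lp : lev (s_ (par j)) = k.
  have [p1 _] := par_lab jn.
  apply: succn_inj; rewrite -hx /lev idx_nth ?(ltn_trans p1 (idx_lt x)) //.
  by rewrite /j (Lv_rec jn).
have Rp : index R s <= par j.
  by have := IH (ltnW kp) _ lp; rewrite idx_nth // (ltn_trans _ (idx_lt x)) //; case: (par_lab jn).
rewrite QP kx addn0 => hle.
have xP : x \in Pv.
  apply/negPn/negP => xn; move: hle; rewrite /j nth_idx -/j xn -!addnn /= addn1; lia.
have xm := index_mem x Pv; rewrite xP in xm.
have : lev (nth (s_ 0) Pv (index x Pv)) = index x Pv by apply: levP.
rewrite nth_index // hx => him.
by move: ltxQ; rewrite /Q him nth_index // ltnn.
Qed.

End First.
End BFS.

Lemma is_dist_uniq (T : finType) (e : rel T) P a b d d' :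
  is_dist e P a b d -> is_dist e P a b d' -> d = d'.
Proof.
move=> [w1 m1] [w2 m2]; apply/eqP; rewrite eqn_leq m1 // m2 //.
Qed.

Lemma dist_exists (T : finType) (e : rel T) P a b k :
  walk_in e P a b k -> exists d, is_dist e P a b d.
Proof.
elim/ltn_ind: k => k IH wk.
case: (classic (exists k', k' < k /\ walk_in e P a b k')) => [[k' [lt w]]|no].
  exact: IH lt w.
exists k; split => // k'' w; rewrite leqNgt; apply/negP => lt; apply: no; by exists k''.
Qed.

Unset Implicit Arguments.
Theorem theorem7 (T : finType) (e : rel T) (e_sym : symmetric e)
  (e_irr : irreflexive e) (e_conn : connected_graph e) (e_bip : bipartite e)
  (two : 1 < #|T|) (v : T) :
  (exists s : seq T, is_BFS e s /\ L_branch_leaf e s v) <->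
  (exists r : T, r != v /\
     forall w : T, w != v ->
       forall d : nat, is_dist e predT r w d <-> is_dist e (predC1 v) r w d).
Proof.
split.
  move=> [s [sb leaf]].
  have [rv Hd] := forward e_sym e_irr e_conn v sb e_bip leaf.
  exists (nth v s 0); split => // w wv d.
  have h1 := is_dist_lev e_sym e_irr e_conn v sb w.
  have h2 := Hd w wv.
  by split => hd; [rewrite (is_dist_uniq hd h1) | rewrite (is_dist_uniq hd h2)].
move=> [r [rv H]].
have [D [[p /and4P [pp /eqP pl _ /eqP ps]] Dmin]] : exists D, is_dist e predT r v D.
  case/connectP: (e_conn r v) => p pp pl; apply: (@dist_exists _ _ _ _ _ (size p)).
  by exists p; rewrite pp -pl eqxx eqxx andbT /=; apply/allP.
set P := r :: p; set s := sB e r P.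
have sb : is_BFS e s := sB_BFS e r P.
have s0 : nth r s 0 = r := sB0 e r P.

have distl w : is_dist e predT r w ((lev e s r) w).
  by have := is_dist_lev e_sym e_irr e_conn r sb w; rewrite s0.
have lvv : (lev e s r) v = D by apply: is_dist_uniq (distl v) _; split => //; exists p; rewrite pp pl ps /= !eqxx andbT; apply/allP.
have greedy := sB_greedy (e := e) (r := r) (P := P).
have fl : forall x, (lev e s r) x = D -> index v s <= index x s.
  move=> x hx.
  have := @first_layer T e e_sym e_irr e_conn s r sb p.
  rewrite s0 pl lvv ps -/P => /(_ pp erefl).
  have sz : size s = #|T| by rewrite /s size_sB.
  rewrite sz => /(_ greedy D (leqnn _) x hx).
  suff -> : nth r P D = v by [].
  by rewrite /P -ps -pl -[size p]/((size (r :: p)).-1) nth_last.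
exists s; split => //; split.
  apply/eqP => h; move: rv; rewrite -(nth_index r (sB_all e r P v)) -/s h s0 eqxx //.
move=> [u [iu euv umax]].
have uv : u != v by apply: contraTneq euv => ->; rewrite e_irr.
have l1 : (lev e s r) v <= (lev e s r) u by apply: (lev_mono e_conn r sb); apply: ltnW.
have l2 : (lev e s r) u <= ((lev e s r) v).+1 by apply: (lev_edge e_sym e_irr e_conn r sb).
have l3 : (lev e s r) u != (lev e s r) v by apply: (lev_edge_neq e_conn r sb e_bip).
have lu : (lev e s r) u = D.+1 by rewrite -lvv; lia.
have [[q /and4P [qp /eqP ql qa /eqP qs]] _] := (H u uv ((lev e s r) u)).1 (distl u).
case/lastP: q qp ql qa qs => [|q x]; first by rewrite lu.
rewrite rcons_path last_rcons size_rcons => /andP [qp exu] ql qa /eqP; rewrite lu eqSS => /eqP qs.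
subst x.
set y := last r q.
have yv : y != v.
  move: qa; rewrite -cats1 -cat_cons all_cat => /andP [/allP /(_ y (mem_last r q))] /= h _; exact: h.
have ly1 : (lev e s r) y <= D.
  by have := lev_path e_sym e_irr e_conn r sb qp; have := lev_root r sb; rewrite s0 => ->; rewrite qs.
have ly2 : (lev e s r) u <= ((lev e s r) y).+1 by apply: (lev_edge e_sym e_irr e_conn r sb); rewrite e_sym.
have ly : (lev e s r) y = D by lia.
have iy : index v s < index y s.
  rewrite ltn_neqAle fl // andbT; apply: contra yv => /eqP h.
  by rewrite -(nth_index r (sB_all e r P v)) -/s h (nth_index r (sB_all e r P y)).
have iyu : index y s < index u s by apply: (@lev_lt_idx T e e_conn s r sb); rewrite ly lu.
have := umax y iyu; rewrite e_sym exu => /(_ isT); rewrite leqNgt iy.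
by [].
Qed.
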